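(* Let $R_*\in(0,\pi)$ be the unique solution in $(0,\pi)$ of $R=(\sin R)(2-\cos R)$, and let $R\in[R_*,\pi]$. Then, with $\widehat W_R(\ell)=\frac{2}{\pi\ell^3}(\ell R-\sin(\ell R))$, $$\widehat W_R(\ell)\le\frac{\widehat W_R(1)}{\ell}\qquad\text{for all integers }\ell\ge1,$$ and the inequality is strict for every $\ell\ge3$.
   Context: $\widehat W_R(\ell)$ is the $\ell$-th Fourier coefficient $\int_{\mathbb T}W_R(\theta)e^{-2\pi i\ell\theta}d\theta$ of the Hegselmann--Krause interaction $W_R(\theta)=(R-2\pi|\theta|)_+^2$ on $\mathbb T=[-\frac12,\frac12)$, for $R\in[0,\pi]$. *)

(* Defs.v *)
From Stdlib Require Import Reals.
Open Scope R_scope.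

(* Closed form of the l-th Fourier coefficient of the Hegselmann--Krause
   interaction W_r(theta) = (r - 2 pi |theta|)_+^2 on T = [-1/2,1/2),
   for r in [0,pi] and l >= 1:
     What r l = 2/(pi l^3) (l r - sin (l r)). *)
Definition What (r l : R) : R := 2 / (PI * l ^ 3) * (l * r - sin (l * r)).

(* Main.v *)
Require Import Defs.
From Stdlib Require Import Reals.
From Stdlib Require Import Lra Psatz.
Open Scope R_scope.

Definition fR (x : R) := x - sin x * (2 - cos x).

Lemma fR_cont : continuity fR.
Proof. unfold fR. apply continuity_minus. apply derivable_continuous, derivable_id.
apply continuity_mult. apply continuity_sin. apply continuity_minus. apply continuity_const. intros a b; reflexivity. apply continuity_cos. Qed.

Lemma sc1 : 0.84 <= sin 1 /\ 0.54 <= cos 1.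
Proof.
  assert (h1 := PI2_1).
  destruct (SIN 1) as [A _]; try lra.
  destruct (COS 1) as [B _]; try lra.
  unfold sin_lb, cos_lb, sin_approx, cos_approx in *; simpl in *.
  unfold sum_f_R0 in *.
  assert (E1 : sin_term 1 0 + sin_term 1 1 + sin_term 1 2 + sin_term 1 3 = 4241/5040)
    by (unfold sin_term; simpl; field).
  assert (E2 : cos_term 1 0 + cos_term 1 1 + cos_term 1 2 + cos_term 1 3 = 389/720)
    by (unfold cos_term; simpl; field).
  split; lra.
Qed.

Lemma f2_neg : fR 2 < 0.
Proof.
  destruct sc1 as [hs hc]. unfold fR.
  assert (E1 : sin 2 = 2 * sin 1 * cos 1) by (rewrite <- sin_2a; f_equal; ring).
  assert (E2 : cos 2 = 1 - 2 * sin 1 * sin 1) by (rewrite <- cos_2a_sin; f_equal; ring).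
  rewrite E1, E2.
  assert (P1 : sin 1 * cos 1 >= 0.84 * 0.54) by nra.
  assert (P2 : sin 1 * sin 1 >= 0.84 * 0.84) by nra.
  nra.
Qed.

Lemma fPI_pos : 0 < fR PI.
Proof. unfold fR. rewrite sin_PI. assert (h := PI_RGT_0). lra. Qed.

Lemma What_le (r l : R) : 0 < l ->
  l * r - sin (l * r) <= l^2 * (r - sin r) -> What r l <= What r 1 / l.
Proof.
  intros hl H. unfold What. assert (hp := PI_RGT_0).
  replace (2 / (PI * 1 ^ 3) * (1 * r - sin (1 * r)) / l)
    with (2 / (PI * l ^ 3) * (l^2 * (r - sin r))) by (rewrite Rmult_1_l; field; lra).
  apply Rmult_le_compat_l; auto.
  apply Rlt_le, Rdiv_lt_0_compat; [lra|]. apply Rmult_lt_0_compat; auto. apply pow_lt; auto.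
Qed.

Lemma What_lt (r l : R) : 0 < l ->
  l * r - sin (l * r) < l^2 * (r - sin r) -> What r l < What r 1 / l.
Proof.
  intros hl H. unfold What. assert (hp := PI_RGT_0).
  replace (2 / (PI * 1 ^ 3) * (1 * r - sin (1 * r)) / l)
    with (2 / (PI * l ^ 3) * (l^2 * (r - sin r))) by (rewrite Rmult_1_l; field; lra).
  apply Rmult_lt_compat_l; auto.
  apply Rdiv_lt_0_compat; [lra|]. apply Rmult_lt_0_compat; auto. apply pow_lt; auto.
Qed.

Theorem lemma3p4 (Rs r : R)
  (hRs : 0 < Rs < PI)
  (hRs_eq : Rs = sin Rs * (2 - cos Rs))
  (hRs_uniq : forall x : R, 0 < x < PI -> x = sin x * (2 - cos x) -> x = Rs)
  (hr : Rs <= r <= PI) :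
  (forall l : nat, (1 <= l)%nat -> What r (INR l) <= What r 1 / INR l) /\
  (forall l : nat, (3 <= l)%nat -> What r (INR l) < What r 1 / INR l).
Proof.
  assert (hpi2 := PI2_1).
  assert (hRs2 : 2 < Rs).
  { destruct (IVT fR 2 PI fR_cont) as [c [hc1 hc2]]; try lra.
    exact f2_neg. exact fPI_pos.
    assert (c <> 2). { intro e; subst c. pose proof f2_neg; lra. }
    assert (c <> PI). { intro e; subst c. pose proof fPI_pos; lra. }
    assert (c = Rs). { apply hRs_uniq. lra. unfold fR in hc2; lra. }
    lra. }
  assert (hf : 0 <= fR r).
  { destruct (Rle_or_lt 0 (fR r)) as [h|h]; auto. exfalso.
    assert (r <> PI). { intro e; subst r. pose proof fPI_pos; lra. }
    destruct (IVT fR r PI fR_cont) as [c [hc1 hc2]]; try lra.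
    exact fPI_pos.
    assert (c <> r). { intro e; subst c. lra. }
    assert (c <> PI). { intro e; subst c. pose proof fPI_pos; lra. }
    assert (c = Rs). { apply hRs_uniq. lra. unfold fR in hc2; lra. }
    lra. }
  unfold fR in hf.
  assert (hs1 := SIN_bound r).
  assert (hsl : 2 * r - 3 * sin r >= 1) by (destruct hs1; lra).
  assert (key3 : forall l : nat, (3 <= l)%nat ->
     INR l * r - sin (INR l * r) < (INR l)^2 * (r - sin r)).
  { intros l hl. assert (hL : 3 <= INR l) by (replace 3 with (INR 3) by (simpl; ring); apply le_INR; auto).
    assert (hb := SIN_bound (INR l * r)).
    assert (hp : (INR l)^2 * (r - sin r) >= 3 * INR l * (r - sin r)).
    { simpl. assert (D : 0 <= r - sin r) by lra.
      assert (0 <= (INR l - 3) * (r - sin r)) by (apply Rmult_le_pos; lra).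
      assert (0 <= INR l * ((INR l - 3) * (r - sin r))) by (apply Rmult_le_pos; lra).
      nra. }
    nra. }
  split.
  - intros l hl. apply What_le. apply lt_0_INR; lia.
    destruct (Nat.le_gt_cases 3 l) as [h3|h3].
    + apply Rlt_le, key3; auto.
    + destruct l as [|[|[|l]]]; try lia.
      * simpl. rewrite !Rmult_1_l. lra.
      * replace (INR 2) with 2 by (simpl; ring).
        rewrite sin_2a. nra.
  - intros l hl. apply What_lt. apply lt_0_INR; lia. apply key3; auto.
Qed.
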